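(* Let $m$ be the weight defined below; all implicit constants are absolute. Then: (i) There is an absolute constant $C$ such that $1\le m(t,k,\eta)\le C$ for all $t\ge0$, $(k,\eta)\in\mathbb Z\times\mathbb R$. (ii) If $t\ge0$, $k\neq0$ and $(l,\xi)\in S_t$, then $\dfrac{1}{1+|t-\eta/k|}\lesssim\sqrt{\tfrac{\partial_tm}{m}(t,l,\xi)}\,\langle k-l,\eta-\xi\rangle^3$. (iii) If $t\ge1$, $k\neq0$ and $|k,\eta|\le2|l,\xi|$, then $$\frac{|k,\eta|}{k^2}\frac{1}{1+|t-\eta/k|^2}\lesssim\frac{\langle\eta/k^3\rangle^{1/2}}{1+|t-\eta/k|}\Big(1+\sqrt t\sqrt{\tfrac{\partial_tm}{m}(t,l,\xi)}\Big)\langle k-l,\eta-\xi\rangle^5+\frac{1}{\langle t\rangle^2}.$$ (iv) For all $t\ge0$, $\eta,\xi\in\mathbb R$ and $k\neq0$: $|m(t,k,\eta)-m(t,k,\xi)|\lesssim\dfrac{|\eta-\xi|}{|k|}$.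
   Context: For $(k,\eta)\in\mathbb Z\times\mathbb R$ write $|k,\eta|=|k|+|\eta|$ and $\langle k,\eta\rangle=(1+|k|^2+|\eta|^2)^{1/2}$, $\langle x\rangle=(1+x^2)^{1/2}$. Let $S_t=\{(k,\eta)\in\mathbb Z\times\mathbb R: |k,\eta|\le10t^2\}$. The weight $m(t,k,\eta)$ is defined by $m(0,k,\eta)=1$ and $\partial_tm(t,k,\eta)=\sup_{j\in\mathbb Z\setminus\{0\}}\Big(\frac{10}{1+(\eta/j-t)^2}\frac{1}{\langle k-j\rangle^3}\Big)m(t,k,\eta)$ if $(k,\eta)\in S_t$, and $\partial_tm(t,k,\eta)=0$ otherwise. *)

(* Defs.v *)
From Stdlib Require Import Reals ZArith.
From Coquelicot Require Import Coquelicot.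
Open Scope R_scope.

Definition absKE (k : Z) (eta : R) : R := Rabs (IZR k) + Rabs eta.
Definition jbrKE (k : Z) (eta : R) : R := sqrt (1 + (IZR k)^2 + eta^2).
Definition jbr (x : R) : R := sqrt (1 + x^2).

Definition inS (t : R) (k : Z) (eta : R) : Prop := absKE k eta <= 10 * t^2.

Definition coefj (t : R) (k : Z) (eta : R) (j : Z) : R :=
  10 / (1 + (eta / IZR j - t)^2) * / (jbr (IZR (k - j)))^3.

(* sup over j in Z \ {0} (the set is nonempty and bounded by 10) *)
Definition supcoef (t : R) (k : Z) (eta : R) : R :=
  real (Lub_Rbar (fun x => exists j : Z, j <> 0%Z /\ x = coefj t k eta j)).

Definition dtm_over_m (t : R) (k : Z) (eta : R) : R :=
  if Rle_dec (absKE k eta) (10 * t^2) then supcoef t k eta else 0.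

(* The weight m: the (absolutely continuous) solution of
   d_t m = (dtm_over_m) m, m(0) = 1, i.e. m = exp (int_0^t dtm_over_m). *)
Definition m (t : R) (k : Z) (eta : R) : R :=
  exp (RInt (fun s => dtm_over_m s k eta) 0 t).

(* Main.v *)
Require Import Defs.
From Stdlib Require Import Reals ZArith Lra Lia Psatz.
From Coquelicot Require Import Coquelicot.
Open Scope R_scope.

Lemma jbr_sq x : jbr x ^ 2 = 1 + x ^ 2.
Proof. unfold jbr. rewrite pow2_sqrt; [lra| nra]. Qed.

Lemma jbr_ge1 x : 1 <= jbr x.
Proof. unfold jbr. apply Rle_trans with (sqrt 1); [rewrite sqrt_1; lra| apply sqrt_le_1_alt; nra]. Qed.

Lemma jbr_ge_abs x : Rabs x <= jbr x.
Proof. pose proof (jbr_sq x). pose proof (jbr_ge1 x).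
  apply Rsqr_incr_0_var; [| lra]. rewrite <- Rsqr_abs. unfold Rsqr. nra. Qed.

Lemma w_pos x : 0 < / jbr x ^ 3.
Proof. pose proof (jbr_ge1 x). apply Rinv_0_lt_compat. apply pow_lt. lra. Qed.

Lemma w_le x : / jbr x ^ 3 <= / (1 + x ^ 2).
Proof. pose proof (jbr_ge1 x). pose proof (jbr_sq x).
  apply Rinv_le_contravar. nra. replace (jbr x ^ 3) with (jbr x * jbr x ^ 2) by ring. nra. Qed.

Lemma w_le1 x : / jbr x ^ 3 <= 1.
Proof. pose proof (w_le x). assert (/ (1 + x^2) <= 1). { rewrite <- Rinv_1. apply Rinv_le_contravar; nra. } lra. Qed.

Lemma g_pos u : 0 < / (1 + u ^ 2).
Proof. apply Rinv_0_lt_compat. nra. Qed.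
Lemma g_le1 u : / (1 + u ^ 2) <= 1.
Proof. rewrite <- Rinv_1. apply Rinv_le_contravar; nra. Qed.

Lemma g_lip a b : Rabs (/ (1 + a^2) - / (1 + b^2)) <= Rabs (a - b) * ((/ (1 + a^2) + / (1 + b^2)) / 2).
Proof.
  assert (Ha : 0 < 1 + a^2) by nra. assert (Hb : 0 < 1 + b^2) by nra.
  replace (/ (1 + a^2) - / (1 + b^2)) with ((b - a) * (b + a) * (/ (1 + a^2) * / (1 + b^2))) by (field; lra).
  replace ((/ (1 + a^2) + / (1 + b^2)) / 2) with ((2 + a^2 + b^2)/2 * (/ (1 + a^2) * / (1 + b^2))) by (field; lra).
  assert (HP : 0 <= / (1 + a^2) * / (1 + b^2)) by (apply Rmult_le_pos; left; apply Rinv_0_lt_compat; lra).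
  set (P := / (1 + a^2) * / (1 + b^2)) in *.
  rewrite Rabs_mult, (Rabs_pos_eq P HP), Rabs_mult.
  rewrite (Rabs_minus_sym b a). rewrite <- Rmult_assoc.
  apply Rmult_le_compat_r. lra. apply Rmult_le_compat_l. apply Rabs_pos.
  pose proof (pow2_ge_0 (a-1)). pose proof (pow2_ge_0 (b-1)). pose proof (pow2_ge_0 (a+1)). pose proof (pow2_ge_0 (b+1)).
  apply Rabs_le. split; nra.
Qed.

Lemma Zabs_ge1 k : k <> 0%Z -> 1 <= Rabs (IZR k).
Proof. intro H. rewrite <- abs_IZR. apply IZR_le. lia. Qed.

Lemma coefj_eq t k eta j : coefj t k eta j = 10 * / jbr (IZR (k - j)) ^ 3 * / (1 + (t - eta / IZR j) ^ 2).
Proof. unfold coefj. unfold Rdiv. replace ((eta * / IZR j - t)^2) with ((t - eta * / IZR j)^2) by ring. ring. Qed.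

Lemma coefj_nonneg t k eta j : 0 <= coefj t k eta j.
Proof. rewrite coefj_eq. pose proof (w_pos (IZR (k-j))). pose proof (g_pos (t - eta / IZR j)).
  apply Rmult_le_pos; [apply Rmult_le_pos|]; lra. Qed.

Lemma coefj_le t k eta j : coefj t k eta j <= 10 * / jbr (IZR (k - j)) ^ 3.
Proof. rewrite coefj_eq. pose proof (w_pos (IZR (k-j))). pose proof (g_pos (t - eta / IZR j)). pose proof (g_le1 (t - eta / IZR j)). nra. Qed.

Lemma coefj_le10 t k eta j : coefj t k eta j <= 10.
Proof. pose proof (coefj_le t k eta j). pose proof (w_le1 (IZR (k-j))). lra. Qed.

Lemma coefj_lip t s k eta j : Rabs (coefj t k eta j - coefj s k eta j) <= 10 * Rabs (t - s).
Proof. rewrite !coefj_eq. set (w := / jbr (IZR (k - j)) ^ 3).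
  pose proof (w_pos (IZR (k-j))). pose proof (w_le1 (IZR (k-j))). fold w in H, H0.
  pose proof (g_lip (t - eta / IZR j) (s - eta / IZR j)).
  pose proof (g_le1 (t - eta / IZR j)). pose proof (g_le1 (s - eta / IZR j)).
  replace (t - eta / IZR j - (s - eta / IZR j)) with (t - s) in H1 by ring.
  replace (10 * w * / (1 + (t - eta / IZR j) ^ 2) - 10 * w * / (1 + (s - eta / IZR j) ^ 2)) with
    ((10 * w) * (/ (1 + (t - eta / IZR j) ^ 2) - / (1 + (s - eta / IZR j) ^ 2))) by ring.
  rewrite Rabs_mult, (Rabs_pos_eq (10*w)) by lra. pose proof (Rabs_pos (t-s)).
  apply Rle_trans with (10 * w * (Rabs (t - s) * 1)). apply Rmult_le_compat_l. lra.
  apply Rle_trans with (1 := H1). apply Rmult_le_compat_l. lra. lra. nra.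
Qed.


Lemma sup_fin t k eta : exists r, Lub_Rbar (fun x => exists j : Z, j <> 0%Z /\ x = coefj t k eta j) = Finite r
  /\ (forall j, j <> 0%Z -> coefj t k eta j <= r)
  /\ (forall M, (forall j, j <> 0%Z -> coefj t k eta j <= M) -> r <= M).
Proof.
  set (E := fun x => exists j : Z, j <> 0%Z /\ x = coefj t k eta j).
  destruct (Lub_Rbar_correct E) as [Hub Hlub].
  assert (HE : forall M, (forall j, j <> 0%Z -> coefj t k eta j <= M) -> is_ub_Rbar E M).
  { intros M HM x [j [Hj ->]]. simpl. apply HM; auto. }
  assert (H1 : E (coefj t k eta 1)). { exists 1%Z. split; [lia|auto]. }
  destruct (Lub_Rbar E) as [r| |] eqn:Hl.
  - exists r. split; [auto|]. split.
    + intros j Hj. apply (Hub (coefj t k eta j)). exists j; auto.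
    + intros M HM. apply (Hlub (Finite M)). apply HE; auto.
  - exfalso. specialize (Hlub (Finite 10)). simpl in Hlub. apply Hlub. apply HE. intros. apply coefj_le10.
  - exfalso. specialize (Hub _ H1). simpl in Hub. auto.
Qed.

Lemma sup_ub t k eta j : j <> 0%Z -> coefj t k eta j <= supcoef t k eta.
Proof. intro Hj. destruct (sup_fin t k eta) as [r [Hr [H1 H2]]]. unfold supcoef. rewrite Hr. simpl. auto. Qed.

Lemma sup_le t k eta M : (forall j, j <> 0%Z -> coefj t k eta j <= M) -> supcoef t k eta <= M.
Proof. intro HM. destruct (sup_fin t k eta) as [r [Hr [H1 H2]]]. unfold supcoef. rewrite Hr. simpl. auto. Qed.

Lemma sup_nonneg t k eta : 0 <= supcoef t k eta.
Proof. apply Rle_trans with (coefj t k eta 1). apply coefj_nonneg. apply sup_ub. lia. Qed.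

Lemma sup_le10 t k eta : supcoef t k eta <= 10.
Proof. apply sup_le. intros. apply coefj_le10. Qed.

Lemma sup_lip t s k eta : Rabs (supcoef t k eta - supcoef s k eta) <= 10 * Rabs (t - s).
Proof.
  assert (forall t s, supcoef t k eta <= supcoef s k eta + 10 * Rabs (t - s)).
  { clear. intros t s. apply sup_le. intros j Hj. pose proof (coefj_lip t s k eta j).
    pose proof (sup_ub s k eta j Hj). apply Rabs_le_between in H. lra. }
  pose proof (H t s). pose proof (H s t). rewrite Rabs_minus_sym in H1. apply Rabs_le. lra.
Qed.

Lemma lip_cont (f : R -> R) L x : (forall y z, Rabs (f y - f z) <= L * Rabs (y - z)) -> continuous f x.
Proof.
  intro Hf. apply continuity_pt_filterlim. intros eps Heps.
  assert (HL : 0 <= Rabs L) by apply Rabs_pos.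
  exists (eps / (Rabs L + 1)). split. apply Rdiv_lt_0_compat; lra.
  intros y [_ Hy]. simpl in *. unfold R_dist in *.
  apply Rle_lt_trans with (Rabs L * Rabs (y - x)).
  { apply Rle_trans with (1 := Hf y x). apply Rmult_le_compat_r. apply Rabs_pos. apply RRle_abs. }
  apply Rle_lt_trans with (Rabs L * (eps / (Rabs L + 1))).
  apply Rmult_le_compat_l; lra.
  apply Rlt_le_trans with ((Rabs L + 1) * (eps / (Rabs L + 1))). apply Rmult_lt_compat_r. apply Rdiv_lt_0_compat; lra. lra.
  right. field. lra.
Qed.

Lemma sup_cont k eta x : continuous (fun s => supcoef s k eta) x.
Proof. apply lip_cont with 10. intros. apply sup_lip. Qed.
Lemma coefj_cont k eta j x : continuous (fun s => coefj s k eta j) x.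
Proof. apply lip_cont with 10. intros. apply coefj_lip. Qed.


Definition thr k eta := sqrt (absKE k eta / 10).

Lemma absKE_nonneg k eta : 0 <= absKE k eta.
Proof. unfold absKE. pose proof (Rabs_pos (IZR k)). pose proof (Rabs_pos eta). lra. Qed.

Lemma thr_sq k eta : thr k eta ^ 2 = absKE k eta / 10.
Proof. unfold thr. rewrite pow2_sqrt. auto. pose proof (absKE_nonneg k eta). lra. Qed.

Lemma thr_nonneg k eta : 0 <= thr k eta.
Proof. apply sqrt_pos. Qed.

Lemma dtm_below s k eta : 0 <= s < thr k eta -> dtm_over_m s k eta = 0.
Proof. intros [H1 H2]. unfold dtm_over_m. destruct Rle_dec as [H|H]; auto.
  pose proof (thr_sq k eta). pose proof (thr_nonneg k eta). exfalso. nra. Qed.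

Lemma dtm_above s k eta : thr k eta <= s -> dtm_over_m s k eta = supcoef s k eta.
Proof. intros H2. unfold dtm_over_m. destruct Rle_dec as [H|H]; auto.
  pose proof (thr_sq k eta). pose proof (thr_nonneg k eta). exfalso. apply H. nra. Qed.

Lemma ex_RInt_sup k eta a b : ex_RInt (fun s => supcoef s k eta) a b.
Proof. apply (@ex_RInt_continuous R_CompleteNormedModule). intros. apply sup_cont. Qed.
Lemma ex_RInt_coefj k eta j a b : ex_RInt (fun s => coefj s k eta j) a b.
Proof. apply (@ex_RInt_continuous R_CompleteNormedModule). intros. apply coefj_cont. Qed.

Lemma RInt_dtm t k eta : 0 <= t ->
  RInt (fun s => dtm_over_m s k eta) 0 t = RInt (fun s => supcoef s k eta) (Rmin (thr k eta) t) t.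
Proof.
  intro Ht. set (a := Rmin (thr k eta) t).
  pose proof (thr_nonneg k eta).
  assert (Ha0 : 0 <= a) by (unfold a; apply Rmin_glb; lra).
  assert (Hat : a <= t) by (unfold a; apply Rmin_r).
  assert (E1 : forall x, Rmin 0 a < x < Rmax 0 a -> dtm_over_m x k eta = 0).
  { intros x Hx. rewrite Rmin_left, Rmax_right in Hx by lra. apply dtm_below.
    split; [lra|]. assert (a <= thr k eta) by (unfold a; apply Rmin_l). lra. }
  assert (E2 : forall x, Rmin a t < x < Rmax a t -> supcoef x k eta = dtm_over_m x k eta).
  { intros x Hx. rewrite Rmin_left, Rmax_right in Hx by lra. symmetry. apply dtm_above.
    unfold a in Hx. destruct (Rle_dec (thr k eta) t).
    - rewrite Rmin_left in Hx; lra.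
    - rewrite Rmin_right in Hx; lra. }
  assert (X1 : ex_RInt (fun s => dtm_over_m s k eta) 0 a).
  { apply ex_RInt_ext with (fun _ => 0). intros. symmetry. apply E1; auto. apply ex_RInt_const. }
  assert (X2 : ex_RInt (fun s => dtm_over_m s k eta) a t).
  { apply ex_RInt_ext with (1 := E2). apply ex_RInt_sup. }
  rewrite <- (RInt_Chasles _ 0 a t X1 X2).
  rewrite (RInt_ext _ (fun _ => 0) 0 a E1). rewrite RInt_const.
  rewrite (RInt_ext _ _ a t (fun x Hx => eq_sym (E2 x Hx))).
  unfold plus, scal; simpl. unfold mult; simpl. change zero with 0. ring.
Qed.


Lemma RInt_coefj k eta j a b : a <= b -> RInt (fun s => coefj s k eta j) a b <= 10 * PI * / jbr (IZR (k - j)) ^ 3.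
Proof.
  intro Hab. set (w := / jbr (IZR (k - j)) ^ 3). set (c := eta / IZR j).
  assert (Hw : 0 < w) by apply w_pos.
  assert (H : is_RInt (fun s => coefj s k eta j) a b (minus (10 * w * atan (b - c)) (10 * w * atan (a - c)))).
  { apply (@is_RInt_derive R_CompleteNormedModule (fun s => 10 * w * atan (s - c))).
    - intros x _. rewrite coefj_eq. fold w c. apply is_derive_Reals.
      replace (10 * w * / (1 + (x - c) ^ 2)) with (10 * w * (/ (1 + (x - c) ^ 2) * (1 - 0))) by ring.
      apply derivable_pt_lim_scal. apply (derivable_pt_lim_comp (fun s => s - c) atan).
      apply derivable_pt_lim_minus. apply derivable_pt_lim_id. apply derivable_pt_lim_const.
      apply derivable_pt_lim_atan.
    - intros. apply coefj_cont. }
  rewrite (is_RInt_unique _ _ _ _ H). unfold minus, plus, opp; simpl.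
  pose proof (atan_bound (b - c)). pose proof (atan_bound (a - c)).
  replace (10 * w * atan (b - c) + - (10 * w * atan (a - c))) with (10 * w * (atan (b - c) - atan (a - c))) by ring.
  replace (10 * PI * w) with (10 * w * PI) by ring.
  apply Rmult_le_compat_l. lra. lra.
Qed.

Definition SW (F : Z -> R) (k : Z) (N : nat) :=
  sum_f_R0 (fun n => F (k + Z.of_nat n)%Z) N + sum_f_R0 (fun n => F (k - Z.of_nat n)%Z) N.

Lemma sum_ge_term (f : nat -> R) i N : (forall n, 0 <= f n) -> (i <= N)%nat -> f i <= sum_f_R0 f N.
Proof.
  intros Hf HiN. induction N.
  - assert (i = 0%nat) by lia. subst. simpl. lra.
  - simpl. destruct (Nat.eq_dec i (S N)).
    + subst. pose proof (cond_pos_sum f N Hf). lra.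
    + pose proof (Hf (S N)). assert (f i <= sum_f_R0 f N) by (apply IHN; lia). lra.
Qed.

Lemma sum_nonneg (f : nat -> R) N : (forall n, 0 <= f n) -> 0 <= sum_f_R0 f N.
Proof. intros. apply cond_pos_sum. auto. Qed.

Lemma sum_le (f g : nat -> R) N : (forall n, f n <= g n) -> sum_f_R0 f N <= sum_f_R0 g N.
Proof. intros H. induction N; simpl; [apply H|]. pose proof (H (S N)). lra. Qed.

Lemma sum_scal (f : nat -> R) c N : sum_f_R0 (fun n => c * f n) N = c * sum_f_R0 f N.
Proof. induction N; simpl; [ring|]. rewrite IHN. ring. Qed.

Lemma SW_ge F k N j : (forall j, 0 <= F j) -> (Z.abs (j - k) <= Z.of_nat N)%Z -> F j <= SW F k N.
Proof.
  intros HF Hj. unfold SW.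
  pose proof (sum_nonneg (fun n => F (k + Z.of_nat n)%Z) N (fun n => HF _)).
  pose proof (sum_nonneg (fun n => F (k - Z.of_nat n)%Z) N (fun n => HF _)).
  set (n := Z.to_nat (Z.abs (j - k))).
  destruct (Z_le_gt_dec k j).
  - assert (j = k + Z.of_nat n)%Z by (unfold n; lia).
    pose proof (sum_ge_term (fun n => F (k + Z.of_nat n)%Z) n N (fun n => HF _)). simpl in H2.
    rewrite <- H1 in H2. assert (F j <= sum_f_R0 (fun n0 : nat => F (k + Z.of_nat n0)%Z) N) by (apply H2; unfold n; lia). lra.
  - assert (j = k - Z.of_nat n)%Z by (unfold n; lia).
    pose proof (sum_ge_term (fun n => F (k - Z.of_nat n)%Z) n N (fun n => HF _)). simpl in H2.
    rewrite <- H1 in H2. assert (F j <= sum_f_R0 (fun n0 : nat => F (k - Z.of_nat n0)%Z) N) by (apply H2; unfold n; lia). lra.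
Qed.

Lemma SW_nonneg F k N : (forall j, 0 <= F j) -> 0 <= SW F k N.
Proof. intros HF. unfold SW.
  pose proof (sum_nonneg (fun n => F (k + Z.of_nat n)%Z) N (fun n => HF _)).
  pose proof (sum_nonneg (fun n => F (k - Z.of_nat n)%Z) N (fun n => HF _)). lra. Qed.

Lemma SW_le F G k N : (forall j, F j <= G j) -> SW F k N <= SW G k N.
Proof. intros H. unfold SW.
  pose proof (sum_le (fun n => F (k + Z.of_nat n)%Z) (fun n => G (k + Z.of_nat n)%Z) N (fun n => H _)).
  pose proof (sum_le (fun n => F (k - Z.of_nat n)%Z) (fun n => G (k - Z.of_nat n)%Z) N (fun n => H _)). lra. Qed.

Lemma SW_scal F c k N : SW (fun j => c * F j) k N = c * SW F k N.
Proof. unfold SW. rewrite !sum_scal. ring. Qed.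

Lemma sum_inv_sq N : sum_f_R0 (fun n => / (1 + INR n ^ 2)) N <= 3 - 2 / (INR N + 1).
Proof.
  induction N.
  - simpl. lra.
  - rewrite tech5. rewrite S_INR. pose proof (pos_INR N).
    assert (/ (1 + (INR N + 1) ^ 2) <= 2 / (INR N + 1) - 2 / (INR N + 1 + 1)).
    { replace (2 / (INR N + 1) - 2 / (INR N + 1 + 1)) with (2 / ((INR N + 1) * (INR N + 2))) by (field; lra).
      set (x := INR N) in *.
      replace (2 / ((x + 1) * (x + 2))) with (/ (1 + (x + 1)^2) + (2*(1+(x+1)^2) - (x+1)*(x+2)) * / ((1+(x+1)^2) * ((x+1)*(x+2)))) by (field; nra).
      assert (0 <= (2*(1+(x+1)^2) - (x+1)*(x+2)) * / ((1+(x+1)^2) * ((x+1)*(x+2)))).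
      { apply Rmult_le_pos. nra. left. apply Rinv_0_lt_compat. nra. }
      lra. }
    lra.
Qed.

Lemma sum_inv_sq3 N : sum_f_R0 (fun n => / (1 + INR n ^ 2)) N <= 3.
Proof. pose proof (sum_inv_sq N). pose proof (pos_INR N). assert (0 < 2 / (INR N + 1)) by (apply Rdiv_lt_0_compat; lra). lra. Qed.

Lemma SW_bound k N : SW (fun j => / (1 + IZR (k - j) ^ 2)) k N <= 6.
Proof.
  unfold SW.
  rewrite (sum_eq _ (fun n => / (1 + INR n ^ 2))).
  rewrite (sum_eq (fun n => / (1 + IZR (k - (k - Z.of_nat n)) ^ 2)) (fun n => / (1 + INR n ^ 2))).
  pose proof (sum_inv_sq3 N). lra.
  - intros. f_equal. f_equal. replace (k - (k - Z.of_nat i))%Z with (Z.of_nat i) by lia. rewrite <- INR_IZR_INZ. auto.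
  - intros. f_equal. replace (k - (k + Z.of_nat i))%Z with (- Z.of_nat i)%Z by lia. rewrite opp_IZR, <- INR_IZR_INZ. ring.
Qed.

Lemma RInt_sum (G : nat -> R -> R) N a b : (forall n, ex_RInt (G n) a b) ->
  ex_RInt (fun s => sum_f_R0 (fun n => G n s) N) a b /\
  RInt (fun s => sum_f_R0 (fun n => G n s) N) a b = sum_f_R0 (fun n => RInt (G n) a b) N.
Proof.
  intros HG. induction N.
  - simpl. split; auto. 
  - destruct IHN as [X E]. simpl. split.
    + apply (@ex_RInt_plus R_NormedModule (fun s => sum_f_R0 (fun n => G n s) N) (G (S N))); auto.
    + rewrite (@RInt_plus R_CompleteNormedModule (fun s => sum_f_R0 (fun n => G n s) N) (G (S N))); auto.
      rewrite E. auto.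
Qed.

Lemma RInt_SW (G : Z -> R -> R) k N a b : (forall j, ex_RInt (G j) a b) ->
  ex_RInt (fun s => SW (fun j => G j s) k N) a b /\
  RInt (fun s => SW (fun j => G j s) k N) a b = SW (fun j => RInt (G j) a b) k N.
Proof.
  intros HG. unfold SW.
  destruct (RInt_sum (fun n => G (k + Z.of_nat n)%Z) N a b) as [X1 E1]; auto.
  destruct (RInt_sum (fun n => G (k - Z.of_nat n)%Z) N a b) as [X2 E2]; auto.
  split.
  - apply (@ex_RInt_plus R_NormedModule (fun s => sum_f_R0 (fun n => G (k + Z.of_nat n)%Z s) N) (fun s => sum_f_R0 (fun n => G (k - Z.of_nat n)%Z s) N)); auto.
  - rewrite (@RInt_plus R_CompleteNormedModule (fun s => sum_f_R0 (fun n => G (k + Z.of_nat n)%Z s) N) (fun s => sum_f_R0 (fun n => G (k - Z.of_nat n)%Z s) N)); auto.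
    rewrite E1, E2. auto.
Qed.


Lemma far_w k j N : (Z.of_nat N < Z.abs (k - j))%Z -> / jbr (IZR (k - j)) ^ 3 <= / (1 + INR N ^ 2).
Proof.
  intro H. apply Rle_trans with (1 := w_le _). apply Rinv_le_contravar. pose proof (pos_INR N); nra.
  assert (INR N <= Rabs (IZR (k - j))).
  { rewrite <- abs_IZR, INR_IZR_INZ. apply IZR_le. lia. }
  pose proof (pos_INR N). rewrite <- (pow2_abs (IZR (k - j))). nra.
Qed.

Lemma sup_tail s k eta N : supcoef s k eta <= SW (fun j => coefj s k eta j) k N + 10 / (1 + INR N ^ 2).
Proof.
  apply sup_le. intros j _.
  assert (Hp : 0 <= 10 / (1 + INR N ^ 2)) by (apply Rdiv_le_0_compat; [lra| pose proof (pos_INR N); nra]).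
  destruct (Z_le_gt_dec (Z.abs (j - k)) (Z.of_nat N)).
  - pose proof (SW_ge (fun j => coefj s k eta j) k N j (fun j => coefj_nonneg s k eta j) l). simpl in H. lra.
  - pose proof (coefj_le s k eta j). pose proof (far_w k j N ltac:(lia)).
    pose proof (SW_nonneg (fun j => coefj s k eta j) k N (fun j => coefj_nonneg s k eta j)).
    unfold Rdiv. lra.
Qed.

Lemma int_plus_const (f : R -> R) c a b : ex_RInt f a b ->
  ex_RInt (fun s => f s + c) a b /\ RInt (fun s => f s + c) a b = RInt f a b + (b - a) * c.
Proof.
  intros X. split.
  - apply (@ex_RInt_plus R_NormedModule f (fun _ => c)); auto. apply ex_RInt_const.
  - rewrite (@RInt_plus R_CompleteNormedModule f (fun _ => c)); auto. 2: apply ex_RInt_const.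
    rewrite RInt_const. reflexivity.
Qed.

Lemma int_sup_bound k eta a t : a <= t -> RInt (fun s => supcoef s k eta) a t <= 241.
Proof.
  intro Hat. destruct (INR_unbounded (10 * (t - a))) as [N HN].
  destruct (RInt_SW (fun j s => coefj s k eta j) k N a t) as [X1 E1].
  { intros. apply ex_RInt_coefj. }
  destruct (int_plus_const (fun s => SW (fun j => coefj s k eta j) k N) (10 / (1 + INR N ^ 2)) a t X1) as [X2 E2].
  apply Rle_trans with (RInt (fun s => SW (fun j => coefj s k eta j) k N + 10 / (1 + INR N ^ 2)) a t).
  { apply RInt_le; auto. apply ex_RInt_sup. intros. apply sup_tail. }
  rewrite E2, E1.
  assert (SW (fun j => RInt (fun s => coefj s k eta j) a t) k N <= 240).
  { apply Rle_trans with (SW (fun j => (10 * PI) * / (1 + IZR (k - j) ^ 2)) k N).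
    apply SW_le. intros j. apply Rle_trans with (1 := RInt_coefj k eta j a t Hat).
    apply Rmult_le_compat_l. pose proof PI_RGT_0; lra. apply w_le.
    rewrite SW_scal. pose proof (SW_bound k N). pose proof PI_4. pose proof PI_RGT_0.
    apply Rle_trans with (10 * PI * 6). apply Rmult_le_compat_l; lra. lra. }
  assert ((t - a) * (10 / (1 + INR N ^ 2)) <= 1).
  { pose proof (pos_INR N). unfold Rdiv.
    apply Rle_trans with (INR N / 10 * (10 * / (1 + INR N ^ 2))).
    apply Rmult_le_compat_r. apply Rmult_le_pos. lra. left; apply Rinv_0_lt_compat; nra. lra.
    replace (INR N / 10 * (10 * / (1 + INR N ^ 2))) with (INR N / (1 + INR N ^ 2)) by (field; nra).
    apply Rmult_le_reg_r with (1 + INR N ^ 2). nra. unfold Rdiv. rewrite Rmult_assoc, Rinv_l by nra. nra. }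
  lra.
Qed.

Lemma int_sup_nonneg k eta a t : a <= t -> 0 <= RInt (fun s => supcoef s k eta) a t.
Proof. intro. apply RInt_ge_0; auto. apply ex_RInt_sup. intros. apply sup_nonneg. Qed.

Lemma part_i : exists C : R, forall (t : R) (k : Z) (eta : R), 0 <= t -> 1 <= m t k eta /\ m t k eta <= C.
Proof.
  exists (exp 241). intros t k eta Ht. unfold m. rewrite RInt_dtm by auto.
  assert (Rmin (thr k eta) t <= t) by apply Rmin_r.
  pose proof (int_sup_bound k eta _ _ H). pose proof (int_sup_nonneg k eta _ _ H).
  split.
  - pose proof (exp_ineq1_le (RInt (fun s : R => supcoef s k eta) (Rmin (thr k eta) t) t)). lra.
  - destruct H0. left. apply exp_increasing; auto. rewrite H0; lra.
Qed.


Lemma frac_le a b c d : 0 < b -> 0 < d -> a * d <= c * b -> a / b <= c / d.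
Proof. intros Hb Hd H. unfold Rdiv.
  apply Rmult_le_reg_r with (b * d). nra.
  replace (a * / b * (b * d)) with (a * d) by (field; lra).
  replace (c * / d * (b * d)) with (c * b) by (field; lra). auto. Qed.

Lemma jbrKE_ge1 k e : 1 <= jbrKE k e.
Proof. unfold jbrKE. apply Rle_trans with (sqrt 1); [rewrite sqrt_1; lra| apply sqrt_le_1_alt; nra]. Qed.

Lemma jbrKE_sq k e : jbrKE k e ^ 2 = 1 + IZR k ^ 2 + e ^ 2.
Proof. unfold jbrKE. rewrite pow2_sqrt; [lra| nra]. Qed.

Lemma jbrKE_ge_e k e : Rabs e <= jbrKE k e.
Proof. pose proof (jbrKE_sq k e). pose proof (jbrKE_ge1 k e).
  apply Rsqr_incr_0_var; [| lra]. rewrite <- Rsqr_abs. unfold Rsqr. nra. Qed.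

Lemma jbr_le_jbrKE k l e : jbr (IZR (l - k)) <= jbrKE (k - l) e.
Proof. unfold jbr, jbrKE. apply sqrt_le_1_alt. rewrite !minus_IZR. nra. Qed.

Lemma dtm_lower t k eta l xi : inS t l xi -> k <> 0%Z ->
  1 / ((1 + Rabs (t - eta / IZR k)) * jbrKE (k - l) (eta - xi) ^ 3) <= sqrt (dtm_over_m t l xi).
Proof.
  intros HS Hk. set (x := Rabs (t - eta / IZR k)). set (D := jbrKE (k - l) (eta - xi)).
  assert (HD : 1 <= D) by apply jbrKE_ge1.
  assert (Hx : 0 <= x) by apply Rabs_pos.
  assert (HK := Zabs_ge1 k Hk).
  assert (Hdtm : dtm_over_m t l xi = supcoef t l xi).
  { unfold dtm_over_m. destruct Rle_dec; auto. contradiction. }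
  assert (Hc : coefj t l xi k <= dtm_over_m t l xi) by (rewrite Hdtm; apply sup_ub; auto).
  rewrite coefj_eq in Hc.
  set (J := jbr (IZR (l - k))) in Hc.
  assert (HJ : J <= D) by apply jbr_le_jbrKE.
  assert (HJ1 : 1 <= J) by apply jbr_ge1.
  assert (Hu : Rabs (t - xi / IZR k) <= x + D).
  { assert (Rabs (eta / IZR k - xi / IZR k) <= D).
    { replace (eta / IZR k - xi / IZR k) with ((eta - xi) / IZR k) by (field; apply not_0_IZR; auto).
      rewrite Rabs_div by (apply not_0_IZR; auto).
      apply Rle_trans with (Rabs (eta - xi)). 2: apply jbrKE_ge_e.
      unfold Rdiv. pose proof (Rabs_pos (eta - xi)).
      apply Rle_trans with (Rabs (eta - xi) * 1). 2: lra. apply Rmult_le_compat_l; auto.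
      rewrite <- Rinv_1. apply Rinv_le_contravar; lra. }
    replace (t - xi / IZR k) with ((t - eta / IZR k) + (eta / IZR k - xi / IZR k)) by ring.
    apply Rle_trans with (1 := Rabs_triang _ _). unfold x. lra. }
  set (u := t - xi / IZR k) in *.
  assert (Hu2 : u ^ 2 <= (x + D) ^ 2).
  { rewrite <- (pow2_abs u). pose proof (Rabs_pos u). nra. }
  set (y := 1 / ((1 + x) * D ^ 3)).
  assert (Hy : 0 < y) by (unfold y; apply Rdiv_lt_0_compat; [lra| apply Rmult_lt_0_compat; [lra| apply pow_lt; lra]]).
  rewrite <- (sqrt_pow2 y) by lra. apply sqrt_le_1_alt.
  apply Rle_trans with (2 := Hc).
  assert (HJ3 : J ^ 3 <= D ^ 3) by (apply pow_incr; lra).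
  unfold y. replace ((1 / ((1 + x) * D ^ 3)) ^ 2) with (1 / ((1 + x)^2 * D ^ 6)) by (field; lra).
  replace (10 * / J ^ 3 * / (1 + u ^ 2)) with (10 / (J ^ 3 * (1 + u ^ 2))) by (assert (J <> 0) by lra; assert (1 + u^2 <> 0) by nra; field; auto).
  apply frac_le. apply Rmult_lt_0_compat; [nra| apply pow_lt; lra]. apply Rmult_lt_0_compat; [apply pow_lt; lra| nra].
  assert (x + D <= (1 + x) * D) by nra.
  assert ((x + D)^2 <= ((1 + x) * D)^2) by (apply pow_incr; lra).
  assert (1 <= ((1 + x) * D)^2) by (rewrite <- (pow1 2); apply pow_incr; nra).
  assert (1 + u ^ 2 <= 4 * (1 + x) ^ 2 * D ^ 2) by (rewrite Rpow_mult_distr in *; lra).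
  assert (0 < J ^ 3) by (apply pow_lt; lra).
  assert (J ^ 3 * (1 + u ^ 2) <= D ^ 3 * (4 * (1 + x) ^ 2 * D ^ 2)).
  { apply Rmult_le_compat; nra. }
  assert (D ^ 3 * (4 * (1 + x) ^ 2 * D ^ 2) <= 10 * ((1 + x) ^ 2 * D ^ 6)).
  { replace (D ^ 6) with (D ^ 5 * D) by ring. replace (D ^ 3 * (4 * (1 + x) ^ 2 * D ^ 2)) with (4 * ((1+x)^2 * D^5)) by ring.
    assert (0 <= (1+x)^2 * D^5) by (apply Rmult_le_pos; [nra| apply pow_le; lra]). nra. }
  lra.
Qed.

Lemma part_ii : exists C : R, 0 < C /\
     forall (t : R) (k : Z) (eta : R) (l : Z) (xi : R),
       0 <= t -> k <> 0%Z -> inS t l xi ->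
       1 / (1 + Rabs (t - eta / IZR k))
         <= C * (sqrt (dtm_over_m t l xi) * (jbrKE (k - l) (eta - xi))^3).
Proof.
  exists 1. split. lra. intros t k eta l xi Ht Hk HS.
  pose proof (dtm_lower t k eta l xi HS Hk).
  set (D := jbrKE (k - l) (eta - xi)) in *. set (x := Rabs (t - eta / IZR k)) in *.
  assert (0 <= x) by apply Rabs_pos. assert (1 <= D) by apply jbrKE_ge1.
  assert (0 < D ^ 3) by (apply pow_lt; lra).
  apply Rle_trans with (1 / ((1 + x) * D ^ 3) * D ^ 3).
  right. field. split; lra.
  rewrite Rmult_1_l. apply Rmult_le_compat_r; lra.
Qed.


Lemma sq_le_imp u v : 0 <= v -> u ^ 2 <= v ^ 2 -> u <= v.
Proof. intros Hv H. destruct (Rle_dec u v); auto. exfalso. assert (v < u) by lra. nra. Qed.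

Lemma part_iii : exists C : R, 0 < C /\
     forall (t : R) (k : Z) (eta : R) (l : Z) (xi : R),
       1 <= t -> k <> 0%Z -> absKE k eta <= 2 * absKE l xi ->
       absKE k eta / (IZR k)^2 * (1 / (1 + (Rabs (t - eta / IZR k))^2))
         <= C * (sqrt (jbr (eta / (IZR k)^3)) / (1 + Rabs (t - eta / IZR k))
                   * (1 + sqrt t * sqrt (dtm_over_m t l xi))
                   * (jbrKE (k - l) (eta - xi))^5
                 + 1 / (jbr t)^2).
Proof.
  exists 8. split. lra. intros t k eta l xi Ht Hk _.
  assert (HK := Zabs_ge1 k Hk). set (K := Rabs (IZR k)) in *.
  assert (Hk0 : IZR k <> 0) by (apply not_0_IZR; auto).
  set (z := eta / IZR k). set (x := Rabs (t - z)). set (y := Rabs z).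
  assert (Hx : 0 <= x) by apply Rabs_pos. assert (Hy : 0 <= y) by apply Rabs_pos.
  assert (HyK : Rabs eta = y * K).
  { unfold y, z. rewrite Rabs_div by auto. fold K. field. lra. }
  assert (Hk2 : IZR k ^ 2 = K ^ 2) by (unfold K; rewrite pow2_abs; auto).
  assert (HB : absKE k eta / IZR k ^ 2 = (1 + y) / K).
  { unfold absKE. fold K. rewrite HyK, Hk2. field. lra. }
  rewrite HB.
  set (sA := sqrt (jbr (eta / IZR k ^ 3))).
  assert (HsA1 : 1 <= sA).
  { unfold sA. apply Rle_trans with (sqrt 1); [rewrite sqrt_1; lra| apply sqrt_le_1_alt; apply jbr_ge1]. }
  assert (HsA2 : y / K ^ 2 <= sA ^ 2).
  { unfold sA. rewrite pow2_sqrt by (pose proof (jbr_ge1 (eta / IZR k ^ 3)); lra).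
    apply Rle_trans with (2 := jbr_ge_abs _). rewrite Rabs_div by (apply pow_nonzero; auto).
    rewrite <- RPow_abs. fold K. rewrite HyK. right. field. lra. }
  set (D := jbrKE (k - l) (eta - xi)). assert (HD : 1 <= D) by apply jbrKE_ge1.
  set (st := sqrt t). assert (Hst : st ^ 2 = t) by (unfold st; rewrite pow2_sqrt; lra).
  assert (Hst0 : 0 <= st) by apply sqrt_pos.
  set (q := st * sqrt (dtm_over_m t l xi)).
  assert (Hq : 0 <= q) by (apply Rmult_le_pos; [auto| apply sqrt_pos]).
  set (P := / (1 + x)). assert (HP : 0 < P) by (apply Rinv_0_lt_compat; lra).
  assert (HP1 : P * (1 + x) = 1) by (unfold P; field; lra).
  replace (sA / (1 + x)) with (sA * P) by reflexivity.
  set (T := sA * P * (1 + q) * D ^ 5).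
  assert (HR2 : 0 <= 1 / jbr t ^ 2) by (apply Rdiv_le_0_compat; [lra| apply pow_lt; pose proof (jbr_ge1 t); lra]).
  set (Q := 1 / (1 + x ^ 2)). assert (HQ : 0 < Q) by (apply Rdiv_lt_0_compat; nra).
  assert (HQ1 : Q * (1 + x ^ 2) = 1) by (unfold Q; field; nra).
  assert (HD5 : 1 <= D ^ 5) by (rewrite <- (pow1 5); apply pow_incr; lra).
  assert (HTP : P <= T).
  { unfold T. apply Rle_trans with (1 * P * 1 * 1). lra.
    apply Rmult_le_compat; try lra. apply Rmult_le_compat; try lra. apply Rmult_le_compat; lra. }
  assert (HQP : Q <= 2 * P ^ 2).
  { assert ((1+x)^2 <= 2*(1+x^2)) by (pose proof (pow2_ge_0 (x-1)); nra). assert (Q * (1+x)^2 <= Q * (2*(1+x^2))) by (apply Rmult_le_compat_l; lra). assert (Q * (1+x)^2 <= 2) by lra. assert (P^2 * (1+x)^2 = 1) by (rewrite <- Rpow_mult_distr, HP1; ring). nra. }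
  assert (HP1' : P <= 1) by nra.
  assert (HBQ : (1 + y) / K <= 1 + y).
  { unfold Rdiv. apply Rle_trans with ((1 + y) * 1). apply Rmult_le_compat_l. lra.
    rewrite <- Rinv_1. apply Rinv_le_contravar; lra. lra. }
  assert (HBpos : 0 <= (1 + y) / K) by (apply Rdiv_le_0_compat; lra).
  apply Rle_trans with (8 * T). 2: lra.
  destruct (Rle_dec ((1 + y) / K) 3) as [C1 | C1].
  {
    apply Rle_trans with (3 * Q). apply Rmult_le_compat_r; lra. nra. }
  destruct (Rle_dec y (2 * x)) as [C2 | C2].
  {
    apply Rle_trans with ((1 + 2 * x) * Q). apply Rmult_le_compat_r; lra.
    assert ((1 + 2 * x) * Q <= 4 * P).
    { assert ((1 + 2 * x) * (1 + x) <= 4 * (1 + x ^ 2)) by nra.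
      assert ((1 + 2 * x) * Q * (1 + x) * (1 + x^2) <= 4 * P * (1 + x) * (1 + x ^ 2)).
      { replace ((1 + 2 * x) * Q * (1 + x) * (1 + x^2)) with ((1 + 2 * x) * (1 + x) * (Q * (1 + x^2))) by ring.
        replace (4 * P * (1 + x) * (1 + x ^ 2)) with (4 * (1 + x^2) * (P * (1 + x))) by ring.
        rewrite HQ1, HP1. lra. }
      assert (0 < (1 + x) * (1 + x^2)) by nra.
      apply Rmult_le_reg_r with ((1 + x) * (1 + x^2)). auto. rewrite <- !Rmult_assoc. auto. }
    lra. }
  assert (Hyt1 : y - t <= x).
  { pose proof (Rabs_triang_inv z t) as H. rewrite (Rabs_pos_eq t) in H by lra. rewrite Rabs_minus_sym in H. unfold x, y. lra. }
  assert (Hyt2 : t - y <= x).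
  { pose proof (Rabs_triang_inv t z) as H. rewrite (Rabs_pos_eq t) in H by lra. unfold x, y. lra. }
  assert (Hy2t : y < 2 * t) by lra.
  assert (Ht3y : 2 * t < 3 * y) by lra.
  assert (HB3 : 1 + y > 3 * K).
  { apply Rnot_le_gt in C1. unfold Rdiv in C1. apply Rmult_lt_compat_r with (r := K) in C1; [|lra].
    rewrite Rmult_assoc, Rinv_l in C1 by lra. lra. }
  assert (HKt : K < t) by lra.
  assert (HBt : (1 + y) / K <= 3 * t) by lra.
  destruct (Rle_dec (absKE l xi) (10 * t ^ 2)) as [C3 | C3].
  -
    pose proof (dtm_lower t k eta l xi C3 Hk) as Hlow. fold z x D in Hlow.
    replace (1 / ((1 + x) * D ^ 3)) with (P / D ^ 3) in Hlow by (unfold P; field; lra).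
    assert (HD3 : 0 < D ^ 3) by (apply pow_lt; lra).
    assert (Hq2 : st * (P / D ^ 3) <= q) by (apply Rmult_le_compat_l; auto).
    assert (HT2 : sA * st * P ^ 2 <= T).
    { unfold T. assert (sA * P * q * D ^ 5 <= sA * P * (1 + q) * D ^ 5).
      { apply Rmult_le_compat_r. lra. apply Rmult_le_compat_l. nra. lra. }
      assert (sA * P * (st * (P / D ^ 3)) * D ^ 5 <= sA * P * q * D ^ 5).
      { apply Rmult_le_compat_r. lra. apply Rmult_le_compat_l. nra. auto. }
      replace (sA * P * (st * (P / D ^ 3)) * D ^ 5) with ((sA * st * P ^ 2) * D ^ 2) in H0 by (field; lra).
      assert (sA * st * P ^ 2 * 1 <= sA * st * P ^ 2 * D ^ 2).
      { apply Rmult_le_compat_l. apply Rmult_le_pos; [nra| nra]. nra. }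
      lra. }
    assert (HBs : (1 + y) / K <= 4 * st * sA).
    { apply Rle_trans with (3 * t / K).
      { unfold Rdiv. apply Rmult_le_compat_r. left; apply Rinv_0_lt_compat; lra. lra. }
      apply sq_le_imp. nra.
      replace ((3 * t / K) ^ 2) with (9 * t ^ 2 / K ^ 2) by (field; lra).
      replace ((4 * st * sA) ^ 2) with (16 * st ^ 2 * sA ^ 2) by ring. rewrite Hst.
      apply Rle_trans with (16 * t * (y / K ^ 2)).
      2: { apply Rmult_le_compat_l. lra. auto. }
      unfold Rdiv. rewrite <- Rmult_assoc. apply Rmult_le_compat_r. left; apply Rinv_0_lt_compat; nra. nra. }
    apply Rle_trans with ((4 * st * sA) * (2 * P ^ 2)).
    apply Rmult_le_compat; lra.
    lra.
  -
    apply Rnot_le_gt in C3.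
    assert (HkK : absKE k eta <= 3 * t ^ 2).
    { unfold absKE. fold K. rewrite HyK. assert (y * K <= 2 * t * t) by (apply Rmult_le_compat; lra). nra. }
    assert (Hdiff : 7 * t ^ 2 <= Rabs (IZR (k - l)) + Rabs (eta - xi)).
    { unfold absKE in *. rewrite minus_IZR.
      pose proof (Rabs_triang_inv (IZR l) (IZR k)). pose proof (Rabs_triang_inv xi eta).
      rewrite (Rabs_minus_sym (IZR k)), (Rabs_minus_sym eta). lra. }
    assert (HD2 : 24 * t ^ 4 <= D ^ 2).
    { unfold D. rewrite jbrKE_sq. rewrite <- (pow2_abs (IZR (k - l))), <- (pow2_abs (eta - xi)).
      pose proof (Rabs_pos (IZR (k - l))). pose proof (Rabs_pos (eta - xi)).
      set (a := Rabs (IZR (k - l))) in *. set (b := Rabs (eta - xi)) in *.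
      assert (H49 : (7 * t^2)^2 <= (a + b)^2) by (apply pow_incr; nra).
      pose proof (pow2_ge_0 (a - b)). replace ((7 * t^2)^2) with (49 * t^4) in H49 by ring. nra. }
    assert (HT2 : P * D ^ 2 <= T).
    { unfold T. assert (D ^ 2 <= D ^ 5) by (apply Rle_pow; lia || lra).
      apply Rle_trans with (1 * P * 1 * D ^ 5). nra.
      apply Rmult_le_compat_r. lra. apply Rmult_le_compat; try lra. apply Rmult_le_compat; lra. }
    assert (HP2t : 1 <= P * (2 * t)).
    { assert (1 + x <= 2 * t) by lra. nra. }
    assert (LHS : (1 + y) / K * Q <= 3 * t).
    { assert (Q <= 1) by nra. nra. }
    assert (3 * t <= 8 * (P * D^2)).
    { assert (P * D ^ 2 >= P * (24 * t ^ 4)) by nra.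
      assert (P * (24 * t^4) = 12 * t^3 * (P * (2 * t))) by ring.
      assert (1 <= t^3) by (rewrite <- (pow1 3); apply pow_incr; lra).
      assert (12 * t^3 * 1 <= 12 * t^3 * (P * (2 * t))) by (apply Rmult_le_compat_l; lra).
      assert (t <= t^3) by (replace (t^3) with (t * t^2) by ring; nra). lra. }
    lra.
Qed.


Lemma coefj_thr s k eta j : k <> 0%Z -> 0 <= s -> absKE k eta <= 10 * s ^ 2 ->
  coefj s k eta j <= 2000 * s / Rabs (IZR k).
Proof.
  intros Hk Hs HA. assert (HK := Zabs_ge1 k Hk). set (K := Rabs (IZR k)) in *.
  unfold absKE in HA. fold K in HA. pose proof (Rabs_pos eta).
  assert (Hs3 : 3 / 10 <= s) by nra.
  pose proof (coefj_le10 s k eta j).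
  destruct (Rle_dec (K / 40) s).
  { apply Rle_trans with 10; auto. apply Rmult_le_reg_r with K. lra.
    unfold Rdiv. rewrite Rmult_assoc, Rinv_l by lra. unfold Rdiv in r. nra. }
  assert (He : Rabs eta < K * s / 4) by nra.
  assert (Hsk : K <= 10 * s ^ 2) by lra.
  rewrite coefj_eq. pose proof (w_pos (IZR (k - j))). pose proof (w_le1 (IZR (k - j))).
  set (w := / jbr (IZR (k - j)) ^ 3) in *.
  set (g := / (1 + (s - eta / IZR j) ^ 2)).
  assert (Hg0 : 0 < g) by apply g_pos. assert (Hg1 : g <= 1) by apply g_le1.
  destruct (Rle_dec (K / 2) (Rabs (IZR j))) as [Hj | Hj].
  - assert (HJ0 : IZR j <> 0) by (intro E; rewrite E, Rabs_R0 in Hj; lra).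
    assert (Hq : Rabs (eta / IZR j) < s / 2).
    { rewrite Rabs_div by auto. apply Rmult_lt_reg_r with (Rabs (IZR j)). lra.
      unfold Rdiv. rewrite Rmult_assoc, Rinv_l by lra. nra. }
    assert (Hu : s / 2 <= Rabs (s - eta / IZR j)).
    { pose proof (Rabs_triang_inv s (eta / IZR j)) as Ht. rewrite (Rabs_pos_eq s) in Ht by lra. lra. }
    assert (Hu2 : s ^ 2 / 4 <= (s - eta / IZR j) ^ 2).
    { rewrite <- (pow2_abs (s - eta / IZR j)). nra. }
    assert (Hg : g <= 4 / s ^ 2).
    { unfold g. replace (4 / s ^ 2) with (/ (s ^ 2 / 4)) by (field; lra). apply Rinv_le_contravar; nra. }
    apply Rle_trans with (10 * 1 * (4 / s ^ 2)). apply Rmult_le_compat; nra.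
    replace (10 * 1 * (4 / s ^ 2)) with (40 / s ^ 2) by (field; lra).
    apply frac_le; try nra.
  - assert (Hd : K / 2 < Rabs (IZR (k - j))).
    { rewrite minus_IZR. pose proof (Rabs_triang_inv (IZR k) (IZR j)) as Ht. fold K in Ht. lra. }
    assert (Hw : w <= 4 / K ^ 2).
    { apply Rle_trans with (1 := w_le _). replace (4 / K ^ 2) with (/ (K ^ 2 / 4)) by (field; lra).
      apply Rinv_le_contravar. nra. rewrite <- (pow2_abs (IZR (k - j))). nra. }
    apply Rle_trans with (10 * (4 / K ^ 2) * 1). apply Rmult_le_compat; nra.
    replace (10 * (4 / K ^ 2) * 1) with (40 / K ^ 2) by (field; lra).
    apply frac_le; try nra.
Qed.

Lemma sup_thr s k eta : k <> 0%Z -> 0 <= s -> absKE k eta <= 10 * s ^ 2 ->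
  supcoef s k eta <= 2000 * s / Rabs (IZR k).
Proof. intros. apply sup_le. intros. apply coefj_thr; auto. Qed.

Lemma coefj_diff s k eta xi j :
  Rabs (coefj s k eta j - coefj s k xi j) <= Rabs (eta - xi) / 2 * (Rabs (/ IZR j) * (coefj s k eta j + coefj s k xi j)).
Proof.
  rewrite !coefj_eq. set (w := / jbr (IZR (k - j)) ^ 3). pose proof (w_pos (IZR (k - j))). fold w in H.
  pose proof (g_lip (s - eta / IZR j) (s - xi / IZR j)).
  replace (s - eta / IZR j - (s - xi / IZR j)) with ((xi - eta) * / IZR j) in H0 by (unfold Rdiv; ring).
  rewrite Rabs_mult, (Rabs_minus_sym xi eta) in H0.
  replace (10 * w * / (1 + (s - eta / IZR j) ^ 2) - 10 * w * / (1 + (s - xi / IZR j) ^ 2)) with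
    (10 * w * (/ (1 + (s - eta / IZR j) ^ 2) - / (1 + (s - xi / IZR j) ^ 2))) by ring.
  rewrite Rabs_mult, (Rabs_pos_eq (10 * w)) by lra.
  apply Rle_trans with (10 * w * (Rabs (eta - xi) * Rabs (/ IZR j) * ((/ (1 + (s - eta / IZR j) ^ 2) + / (1 + (s - xi / IZR j) ^ 2)) / 2))).
  apply Rmult_le_compat_l; lra. right. unfold Rdiv. ring.
Qed.

Lemma weight_bound k j : k <> 0%Z ->
  Rabs (/ IZR j) * / jbr (IZR (k - j)) ^ 3 <= 2 / Rabs (IZR k) * / (1 + IZR (k - j) ^ 2).
Proof.
  intro Hk. assert (HK := Zabs_ge1 k Hk).
  assert (Hr : 0 <= 2 / Rabs (IZR k) * / (1 + IZR (k - j) ^ 2)).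
  { apply Rmult_le_pos. apply Rdiv_le_0_compat; lra. left; apply g_pos. }
  destruct (Z.eq_dec j 0) as [E | Hj].
  { subst. simpl IZR. rewrite Rinv_0, Rabs_R0. lra. }
  assert (HJ := Zabs_ge1 j Hj).
  set (d := IZR (k - j)). set (J := jbr d).
  assert (HJ1 : 1 <= J) by apply jbr_ge1. assert (HJd : Rabs d <= J) by apply jbr_ge_abs.
  assert (HJ2 : J ^ 2 = 1 + d ^ 2) by apply jbr_sq.
  assert (Hkj : Rabs (IZR k) <= Rabs (IZR j) + Rabs d).
  { unfold d. rewrite minus_IZR. replace (IZR k) with (IZR j + (IZR k - IZR j)) at 1 by ring. apply Rabs_triang. }
  rewrite Rabs_inv. rewrite <- HJ2.
  replace (/ Rabs (IZR j) * / J ^ 3) with (1 / (Rabs (IZR j) * J ^ 3)) by (field; split; lra).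
  replace (2 / Rabs (IZR k) * / J ^ 2) with (2 / (Rabs (IZR k) * J ^ 2)) by (field; split; lra).
  apply frac_le. apply Rmult_lt_0_compat; [lra| apply pow_lt; lra]. apply Rmult_lt_0_compat; [lra| apply pow_lt; lra].
  replace (J ^ 3) with (J * J ^ 2) by ring.
  assert (Rabs (IZR k) <= 2 * (Rabs (IZR j) * J)) by nra.
  assert (0 < J ^ 2) by (apply pow_lt; lra). nra.
Qed.


Definition Bd k eta xi N s := Rabs (eta - xi) / 2 * SW (fun j => Rabs (/ IZR j) * (coefj s k eta j + coefj s k xi j)) k N
   + 20 / (1 + INR N ^ 2).

Lemma sup_diff s k eta xi N : Rabs (supcoef s k eta - supcoef s k xi) <= Bd k eta xi N s.
Proof.
  assert (HF : forall j, 0 <= Rabs (/ IZR j) * (coefj s k eta j + coefj s k xi j)).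
  { intro j. apply Rmult_le_pos. apply Rabs_pos. pose proof (coefj_nonneg s k eta j). pose proof (coefj_nonneg s k xi j). lra. }
  assert (HSW := SW_nonneg _ k N HF).
  assert (HT : 0 <= 20 / (1 + INR N ^ 2)) by (apply Rdiv_le_0_compat; [lra| pose proof (pos_INR N); nra]).
  assert (HD : 0 <= Rabs (eta - xi) / 2) by (pose proof (Rabs_pos (eta - xi)); lra).
  assert (Hj : forall j, Rabs (coefj s k eta j - coefj s k xi j) <= Bd k eta xi N s).
  { intro j. unfold Bd. destruct (Z_le_gt_dec (Z.abs (j - k)) (Z.of_nat N)).
    - pose proof (coefj_diff s k eta xi j).
      pose proof (SW_ge _ k N j HF l). simpl in H0.
      assert (Rabs (eta - xi) / 2 * (Rabs (/ IZR j) * (coefj s k eta j + coefj s k xi j)) <=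
              Rabs (eta - xi) / 2 * SW (fun j => Rabs (/ IZR j) * (coefj s k eta j + coefj s k xi j)) k N)
        by (apply Rmult_le_compat_l; auto). lra.
    - pose proof (coefj_le s k eta j). pose proof (coefj_le s k xi j). pose proof (far_w k j N ltac:(lia)).
      pose proof (coefj_nonneg s k eta j). pose proof (coefj_nonneg s k xi j).
      assert (HH : 0 <= Rabs (eta - xi) / 2 * SW (fun j => Rabs (/ IZR j) * (coefj s k eta j + coefj s k xi j)) k N)
        by (apply Rmult_le_pos; auto).
      apply Rabs_le. unfold Rdiv in *. split; lra. }
  assert (H1 : supcoef s k eta <= supcoef s k xi + Bd k eta xi N s).
  { apply sup_le. intros j Hj0. pose proof (Hj j). pose proof (sup_ub s k xi j Hj0). apply Rabs_le_between in H. lra. }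
  assert (H2 : supcoef s k xi <= supcoef s k eta + Bd k eta xi N s).
  { apply sup_le. intros j Hj0. pose proof (Hj j). pose proof (sup_ub s k eta j Hj0). apply Rabs_le_between in H. lra. }
  apply Rabs_le. lra.
Qed.

Lemma RInt_G k eta xi j a b : ex_RInt (fun s => Rabs (/ IZR j) * (coefj s k eta j + coefj s k xi j)) a b /\
  RInt (fun s => Rabs (/ IZR j) * (coefj s k eta j + coefj s k xi j)) a b =
  Rabs (/ IZR j) * (RInt (fun s => coefj s k eta j) a b + RInt (fun s => coefj s k xi j) a b).
Proof.
  pose proof (RInt_correct _ _ _ (ex_RInt_coefj k eta j a b)) as I1.
  pose proof (RInt_correct _ _ _ (ex_RInt_coefj k xi j a b)) as I2.
  pose proof (is_RInt_plus _ _ _ _ _ _ I1 I2) as I3.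
  pose proof (is_RInt_scal _ _ _ (Rabs (/ IZR j)) _ I3) as I4.
  split. eexists. exact I4. apply is_RInt_unique. exact I4.
Qed.

Lemma int_Bd k eta xi N b t : b <= t -> k <> 0%Z ->
  ex_RInt (Bd k eta xi N) b t /\
  RInt (Bd k eta xi N) b t <= 120 * PI * Rabs (eta - xi) / Rabs (IZR k) + (t - b) * (20 / (1 + INR N ^ 2)).
Proof.
  intros Hbt Hk. assert (HK := Zabs_ge1 k Hk).
  destruct (RInt_SW (fun j s => Rabs (/ IZR j) * (coefj s k eta j + coefj s k xi j)) k N b t) as [X1 E1].
  { intros j. apply (RInt_G k eta xi j b t). }
  set (f := fun s => SW (fun j => Rabs (/ IZR j) * (coefj s k eta j + coefj s k xi j)) k N) in *.
  pose proof (RInt_correct _ _ _ X1) as I1.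
  pose proof (is_RInt_scal _ _ _ (Rabs (eta - xi) / 2) _ I1) as I2.
  assert (X2 : ex_RInt (fun s => Rabs (eta - xi) / 2 * f s) b t) by (eexists; exact I2).
  destruct (int_plus_const (fun s => Rabs (eta - xi) / 2 * f s) (20 / (1 + INR N ^ 2)) b t X2) as [X3 E3].
  split. exact X3.
  replace (RInt (Bd k eta xi N) b t) with (RInt (fun s => Rabs (eta - xi) / 2 * f s + 20 / (1 + INR N ^ 2)) b t) by reflexivity. rewrite E3. assert (E2 : RInt (fun s => Rabs (eta - xi) / 2 * f s) b t = Rabs (eta - xi) / 2 * RInt f b t) by (apply is_RInt_unique; exact I2). rewrite E2.
  rewrite E1.
  assert (SW (fun j => RInt (fun s => Rabs (/ IZR j) * (coefj s k eta j + coefj s k xi j)) b t) k N <= 240 * PI / Rabs (IZR k)).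
  { apply Rle_trans with (SW (fun j => (40 * PI / Rabs (IZR k)) * / (1 + IZR (k - j) ^ 2)) k N).
    - apply SW_le. intro j. rewrite (proj2 (RInt_G k eta xi j b t)).
      pose proof (RInt_coefj k eta j b t Hbt). pose proof (RInt_coefj k xi j b t Hbt).
      pose proof (weight_bound k j Hk). pose proof (Rabs_pos (/ IZR j)). pose proof PI_RGT_0.
      apply Rle_trans with (Rabs (/ IZR j) * (20 * PI * / jbr (IZR (k - j)) ^ 3)).
      apply Rmult_le_compat_l; lra.
      replace (Rabs (/ IZR j) * (20 * PI * / jbr (IZR (k - j)) ^ 3)) with (20 * PI * (Rabs (/ IZR j) * / jbr (IZR (k - j)) ^ 3)) by ring.
      apply Rle_trans with (20 * PI * (2 / Rabs (IZR k) * / (1 + IZR (k - j) ^ 2))).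
      apply Rmult_le_compat_l; lra. right. unfold Rdiv. ring.
    - rewrite SW_scal. pose proof (SW_bound k N). pose proof PI_RGT_0.
      apply Rle_trans with (40 * PI / Rabs (IZR k) * 6). apply Rmult_le_compat_l. apply Rdiv_le_0_compat; lra. auto.
      right. field. lra. }
  assert (Rabs (eta - xi) / 2 * SW (fun j => RInt (fun s => Rabs (/ IZR j) * (coefj s k eta j + coefj s k xi j)) b t) k N
    <= Rabs (eta - xi) / 2 * (240 * PI / Rabs (IZR k))).
  { apply Rmult_le_compat_l; auto. pose proof (Rabs_pos (eta - xi)). lra. }
  assert (Rabs (eta - xi) / 2 * (240 * PI / Rabs (IZR k)) = 120 * PI * Rabs (eta - xi) / Rabs (IZR k)) by (field; lra).
  lra.
Qed.


Lemma RInt_thr k eta a b : k <> 0%Z -> 0 <= a <= b -> absKE k eta <= 10 * a ^ 2 ->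
  RInt (fun s => supcoef s k eta) a b <= 1000 * (b ^ 2 - a ^ 2) / Rabs (IZR k).
Proof.
  intros Hk [Ha Hab] HA. assert (HK := Zabs_ge1 k Hk). set (K := Rabs (IZR k)) in *.
  assert (I : is_RInt (fun s => 2000 * s / K) a b (minus (1000 * b ^ 2 / K) (1000 * a ^ 2 / K))).
  { apply (@is_RInt_derive R_CompleteNormedModule (fun s => 1000 * s ^ 2 / K)).
    - intros x _. auto_derive. auto. field. lra.
    - intros x _. apply (lip_cont _ (2000 / K)). intros y z.
      replace (2000 * y / K - 2000 * z / K) with (2000 / K * (y - z)) by (field; lra).
      rewrite Rabs_mult, (Rabs_pos_eq (2000 / K)) by (apply Rdiv_le_0_compat; lra). lra. }
  replace (1000 * (b ^ 2 - a ^ 2) / K) with (RInt (fun s => 2000 * s / K) a b).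
  2: { rewrite (is_RInt_unique _ _ _ _ I). unfold minus, plus, opp; simpl. field. lra. }
  apply RInt_le; auto. apply ex_RInt_sup. eexists; exact I.
  intros x Hx. apply sup_thr; auto. lra. nra.
Qed.

Lemma exp_lip X Y M : 0 <= X <= M -> 0 <= Y <= M -> Rabs (exp X - exp Y) <= exp M * Rabs (X - Y).
Proof.
  assert (G : forall X Y, Y <= X <= M -> exp X - exp Y <= exp M * (X - Y)).
  { intros X0 Y0 [H1 H2]. pose proof (exp_ineq1_le (Y0 - X0)).
    assert (E : exp X0 * exp (Y0 - X0) = exp Y0) by (rewrite <- exp_plus; f_equal; ring).
    assert (P : 0 < exp X0) by apply exp_pos.
    assert (exp X0 * (1 + (Y0 - X0)) <= exp Y0) by (rewrite <- E; apply Rmult_le_compat_l; lra).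
    assert (exp X0 <= exp M) by (destruct H2; [left; apply exp_increasing; auto| subst; lra]).
    nra. }
  intros HX HY. destruct (Rle_dec Y X).
  - rewrite !Rabs_pos_eq. apply G; lra. lra.
    assert (exp Y <= exp X) by (destruct r; [left; apply exp_increasing; auto| subst; lra]). lra.
  - rewrite Rabs_minus_sym, (Rabs_minus_sym X). rewrite !Rabs_pos_eq. apply G; lra. lra.
    assert (exp X <= exp Y) by (left; apply exp_increasing; lra). lra.
Qed.

Lemma int_le_plus f g h a b : a <= b -> ex_RInt f a b -> ex_RInt g a b -> ex_RInt h a b ->
  (forall x, a < x < b -> f x <= g x + h x) -> RInt f a b <= RInt g a b + RInt h a b.
Proof.
  intros Hab Xf Xg Xh H.
  pose proof (is_RInt_plus _ _ _ _ _ _ (RInt_correct _ _ _ Xg) (RInt_correct _ _ _ Xh)) as I.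
  assert (E : RInt (fun x => g x + h x) a b = RInt g a b + RInt h a b) by (apply is_RInt_unique; exact I).
  rewrite <- E. apply RInt_le; auto. eexists; exact I.
Qed.

Lemma key t k eta xi : 0 <= t -> k <> 0%Z -> absKE k eta <= absKE k xi ->
  Rabs (RInt (fun s => supcoef s k eta) (Rmin (thr k eta) t) t - RInt (fun s => supcoef s k xi) (Rmin (thr k xi) t) t)
  <= 581 * Rabs (eta - xi) / Rabs (IZR k).
Proof.
  intros Ht Hk HA. assert (HK := Zabs_ge1 k Hk). set (K := Rabs (IZR k)) in *.
  destruct (Req_dec eta xi) as [E | Hne].
  { subst. rewrite Rminus_diag, Rabs_R0, Rminus_diag, Rabs_R0. unfold Rdiv. lra. }
  set (Dl := Rabs (eta - xi)). assert (HDl : 0 < Dl) by (apply Rabs_pos_lt; lra).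
  set (a := Rmin (thr k eta) t). set (b := Rmin (thr k xi) t).
  assert (Hthr : thr k eta <= thr k xi) by (unfold thr; apply sqrt_le_1_alt; lra).
  pose proof (thr_nonneg k eta). pose proof (thr_nonneg k xi).
  assert (Ha0 : 0 <= a) by (unfold a; apply Rmin_glb; lra).
  assert (Hab : a <= b) by (unfold a, b; apply Rle_min_compat_r; auto).
  assert (Hbt : b <= t) by (unfold b; apply Rmin_r).
  assert (HbX : b <= thr k xi) by (unfold b; apply Rmin_l).
  assert (HAd : absKE k xi - absKE k eta <= Dl).
  { unfold absKE, Dl. pose proof (Rabs_triang_inv xi eta). rewrite Rabs_minus_sym in H1. lra. }
  assert (P1 : 0 <= RInt (fun s => supcoef s k eta) a b <= 100 * Dl / K).
  { split. apply int_sup_nonneg; auto.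
    destruct (Req_dec a b) as [E|E].
    { rewrite E, RInt_point. change zero with 0. apply Rdiv_le_0_compat; lra. }
    assert (Ha : a = thr k eta).
    { destruct (Rle_dec (thr k eta) t). unfold a; apply Rmin_left; auto.
      exfalso. assert (a = t) by (unfold a; apply Rmin_right; lra). apply E. lra. }
    assert (HA2 : absKE k eta = 10 * a ^ 2) by (rewrite Ha, thr_sq; field).
    apply Rle_trans with (1000 * (b ^ 2 - a ^ 2) / K).
    apply RInt_thr; [auto| lra| lra].
    assert (b ^ 2 <= thr k xi ^ 2) by (apply pow_incr; lra). rewrite thr_sq in H1.
    apply frac_le; try lra. nra. }
  destruct (INR_unbounded (20 * t * K / Dl)) as [N HN].
  assert (HN2 : (t - b) * (20 / (1 + INR N ^ 2)) <= Dl / K).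
  { pose proof (pos_INR N).
    assert (20 * t * K < INR N * Dl).
    { assert (20 * t * K / Dl * Dl < INR N * Dl) by (apply Rmult_lt_compat_r; lra).
      assert (20 * t * K / Dl * Dl = 20 * t * K) by (field; lra). lra. }
    replace ((t - b) * (20 / (1 + INR N ^ 2))) with (20 * (t - b) / (1 + INR N ^ 2)) by (field; nra).
    apply frac_le. nra. lra.
    assert (20 * (t - b) * K <= 20 * t * K) by nra. assert (INR N <= 1 + INR N ^ 2) by nra.
    assert (INR N * Dl <= (1 + INR N ^ 2) * Dl) by (apply Rmult_le_compat_r; lra). lra. }
  destruct (int_Bd k eta xi N b t Hbt Hk) as [XB IB]. fold K Dl in IB.
  assert (U1 : RInt (fun s => supcoef s k eta) b t <= RInt (fun s => supcoef s k xi) b t + RInt (Bd k eta xi N) b t).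
  { apply int_le_plus; auto; try apply ex_RInt_sup. intros. pose proof (sup_diff x k eta xi N) as Hs. apply Rabs_le_between in Hs. lra. }
  assert (U2 : RInt (fun s => supcoef s k xi) b t <= RInt (fun s => supcoef s k eta) b t + RInt (Bd k eta xi N) b t).
  { apply int_le_plus; auto; try apply ex_RInt_sup. intros. pose proof (sup_diff x k eta xi N) as Hs. apply Rabs_le_between in Hs. lra. }
  rewrite <- (RInt_Chasles (fun s => supcoef s k eta) a b t) by apply ex_RInt_sup.
  unfold plus; simpl.
  assert (120 * PI * Dl / K <= 480 * Dl / K).
  { apply frac_le; [lra|lra|]. pose proof PI_4. assert (0 <= Dl * K) by nra. replace (120 * PI * Dl * K) with (120 * PI * (Dl * K)) by ring. replace (480 * Dl * K) with (480 * (Dl * K)) by ring. nra. }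
  assert (581 * Dl / K = 100 * Dl / K + 480 * Dl / K + Dl / K) by (field; lra).
  apply Rabs_le. lra.
Qed.

Lemma part_iv : exists C : R, 0 < C /\
     forall (t eta xi : R) (k : Z), 0 <= t -> k <> 0%Z ->
       Rabs (m t k eta - m t k xi) <= C * (Rabs (eta - xi) / Rabs (IZR k)).
Proof.
  exists (exp 241 * 581). split. pose proof (exp_pos 241). lra.
  intros t eta xi k Ht Hk. assert (HK := Zabs_ge1 k Hk).
  unfold m. rewrite !RInt_dtm by auto.
  assert (B : forall e, 0 <= RInt (fun s => supcoef s k e) (Rmin (thr k e) t) t <= 241).
  { intro e. assert (Rmin (thr k e) t <= t) by apply Rmin_r. split. apply int_sup_nonneg; auto. apply int_sup_bound; auto. }
  eapply Rle_trans. apply exp_lip; apply B.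
  replace (exp 241 * 581 * (Rabs (eta - xi) / Rabs (IZR k))) with (exp 241 * (581 * Rabs (eta - xi) / Rabs (IZR k))) by (field; lra).
  apply Rmult_le_compat_l. left; apply exp_pos.
  destruct (Rle_dec (absKE k eta) (absKE k xi)).
  - apply key; auto.
  - rewrite Rabs_minus_sym, (Rabs_minus_sym eta). apply key; auto. lra.
Qed.


Theorem lemma4p4 :
  (* (i) *)
  (exists C : R, forall (t : R) (k : Z) (eta : R), 0 <= t ->
     1 <= m t k eta /\ m t k eta <= C)
  /\
  (* (ii) *)
  (exists C : R, 0 < C /\
     forall (t : R) (k : Z) (eta : R) (l : Z) (xi : R),
       0 <= t -> k <> 0%Z -> inS t l xi ->
       1 / (1 + Rabs (t - eta / IZR k))
         <= C * (sqrt (dtm_over_m t l xi) * (jbrKE (k - l) (eta - xi))^3))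
  /\
  (* (iii) *)
  (exists C : R, 0 < C /\
     forall (t : R) (k : Z) (eta : R) (l : Z) (xi : R),
       1 <= t -> k <> 0%Z -> absKE k eta <= 2 * absKE l xi ->
       absKE k eta / (IZR k)^2 * (1 / (1 + (Rabs (t - eta / IZR k))^2))
         <= C * (sqrt (jbr (eta / (IZR k)^3)) / (1 + Rabs (t - eta / IZR k))
                   * (1 + sqrt t * sqrt (dtm_over_m t l xi))
                   * (jbrKE (k - l) (eta - xi))^5
                 + 1 / (jbr t)^2))
  /\
  (* (iv) *)
  (exists C : R, 0 < C /\
     forall (t eta xi : R) (k : Z), 0 <= t -> k <> 0%Z ->
       Rabs (m t k eta - m t k xi) <= C * (Rabs (eta - xi) / Rabs (IZR k))).
Proof.
  split; [exact part_i| split; [exact part_ii| split; [exact part_iii| exact part_iv]]].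
Qed.
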